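(* Let $\pi\in S_n$ and ${\bf m}\in\mathrm{GL}_n(k)$. (1) If $\pi\in\mathcal P_{\bf q}$, then ${\bf r}_\pi\in M(\mathcal{O}_{\bf q}(k^{n}))$. (2) If ${\bf m}\in M(\mathcal{O}_{\bf q}(k^{n}))$, then $\mathrm{Skel}({\bf m})\subseteq\mathcal P_{\bf q}$.
   Context: Let $k$ be a field, $n\ge1$, and ${\bf q}=(q_{ij})\in\mathcal M_n(k)$ with $q_{ij}q_{ji}=1$, $q_{ii}=1$ for all $i,j$. $\mathcal{O}_{\bf q}(k^{n})=k\langle x_1,\dots,x_n\rangle/\langle x_jx_i-q_{ij}x_ix_j\rangle$, graded with $\deg x_i=1$. $M(\mathcal{O}_{\bf q}(k^{n}))$ is the set of $A=(a_{ij})\in \mathrm{GL}_n(k)$ such that $x_i\mapsto \sum_j a_{ji}x_j$ extends to a graded algebra automorphism of $\mathcal{O}_{\bf q}(k^{n})$ (a subgroup of $\mathrm{GL}_n(k)$). The set of compatible permutations is $\mathcal P_{\bf q}=\{\pi\in S_n: q_{\pi(i)\pi(j)}=q_{ij}\ \forall\,1\le i,j\le n\}$, a subgroup of $S_n$. For $\pi\in S_n$, ${\bf r}_\pi=(r_{ij})$ is the permutation matrix with $r_{ij}=1$ if $i=\pi(j)$ and $r_{ij}=0$ otherwise. For ${\bf m}=(m_{ij})\in\mathrm{GL}_n(k)$, $\mathrm{Skel}({\bf m})=\{\pi\in S_n: m_{\pi(i)i}\neq0\ \forall\,1\le i\le n\}$ (nonempty since $\det{\bf m}\ne0$). *)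

(* Defs.v *)
From HB Require Import structures.
From mathcomp Require Import all_boot all_order all_algebra all_fingroup.
Set Implicit Arguments. Unset Strict Implicit. Unset Printing Implicit Defensive.
Import GRing.Theory.
Local Open Scope ring_scope.

(* Noncommutative polynomials k<x_1,...,x_n>: coefficient functions on words
   (seq 'I_n) with finite support (bounded length, alphabet finite). *)
Section QuantumAffineSpace.
Variables (k : fieldType) (n : nat) (q : 'M[k]_n).

Definition ncp := seq 'I_n -> k.
Definition ncpoly (f : ncp) : Prop := exists N : nat, forall w, (N <= size w)%N -> f w = 0.
Definition nc_homog (d : nat) (f : ncp) : Prop := forall w, size w != d -> f w = 0.

Definition nc0 : ncp := fun _ => 0.
Definition nc1 : ncp := fun w => (w == [::])%:R.
Definition ncvar (i : 'I_n) : ncp := fun w => (w == [:: i])%:R.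
Definition ncadd (f g : ncp) : ncp := fun w => f w + g w.
Definition ncsub (f g : ncp) : ncp := fun w => f w - g w.
Definition ncscale (c : k) (f : ncp) : ncp := fun w => c * f w.
Definition ncmul (f g : ncp) : ncp :=
  fun w => \sum_(i < (size w).+1) f (take i w) * g (drop i w).

Definition qrel (i j : 'I_n) : ncp :=
  ncsub (ncmul (ncvar j) (ncvar i)) (ncscale (q i j) (ncmul (ncvar i) (ncvar j))).

Inductive qideal : ncp -> Prop :=
| qideal0 : qideal nc0
| qidealD f g : qideal f -> qideal g -> qideal (ncadd f g)
| qidealG a b i j : ncpoly a -> ncpoly b -> qideal (ncmul (ncmul a (qrel i j)) b).

(* equality in O_q(k^n) = k<x>/I of the classes of f and g *)
Definition qeq (f g : ncp) : Prop := qideal (ncsub f g).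

(* psi, acting on representatives, induces a graded k-algebra automorphism
   of O_q(k^n) sending x_i to sum_j a_ji x_j. *)
Record qgraded_aut (A : 'M[k]_n) (psi : ncp -> ncp) : Prop := {
  qa_poly : forall f, ncpoly f -> ncpoly (psi f);
  qa_wd : forall f g, ncpoly f -> ncpoly g -> qeq f g -> qeq (psi f) (psi g);
  qa_add : forall f g, ncpoly f -> ncpoly g -> qeq (psi (ncadd f g)) (ncadd (psi f) (psi g));
  qa_scale : forall c f, ncpoly f -> qeq (psi (ncscale c f)) (ncscale c (psi f));
  qa_mul : forall f g, ncpoly f -> ncpoly g -> qeq (psi (ncmul f g)) (ncmul (psi f) (psi g));
  qa_one : qeq (psi nc1) nc1;
  qa_gen : forall i, qeq (psi (ncvar i)) (fun w => \sum_(j < n) A j i * ncvar j w);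
  qa_inj : forall f g, ncpoly f -> ncpoly g -> qeq (psi f) (psi g) -> qeq f g;
  qa_surj : forall g, ncpoly g -> exists2 f, ncpoly f & qeq (psi f) g;
  qa_graded : forall d f, ncpoly f -> nc_homog d f ->
                exists2 g, nc_homog d g & qeq (psi f) g
}.

Definition MO (A : 'M[k]_n) : Prop :=
  A \in unitmx /\ exists psi, qgraded_aut A psi.

Definition Pq : {set 'S_n} :=
  [set p : 'S_n | [forall i, forall j, q (p i) (p j) == q i j]].

End QuantumAffineSpace.

Definition rperm (k : fieldType) (n : nat) (p : 'S_n) : 'M[k]_n :=
  \matrix_(i, j) (i == p j)%:R.

Definition Skel (k : fieldType) (n : nat) (m : 'M[k]_n) : {set 'S_n} :=
  [set p : 'S_n | [forall i, m (p i) i != 0]].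

(* Main.v *)
Require Import Defs.
From mathcomp Require Import all_boot all_order all_algebra all_fingroup.
From Stdlib Require Import FunctionalExtensionality.
From mathcomp Require Import zify ring.
Set Implicit Arguments. Unset Strict Implicit. Unset Printing Implicit Defensive.
Import GRing.Theory.
Local Open Scope ring_scope.

Lemma ncmul0 (k : fieldType) (n : nat) (f g : ncp k n) :
  ncmul f g [::] = f [::] * g [::].
Proof. by rewrite /ncmul big_ord_recl big_ord0 addr0. Qed.

Lemma ncmul1 (k : fieldType) (n : nat) (f g : ncp k n) z :
  ncmul f g [:: z] = f [::] * g [:: z] + f [:: z] * g [::].
Proof. by rewrite /ncmul !big_ord_recl big_ord0 addr0. Qed.

Lemma ncmul2 (k : fieldType) (n : nat) (f g : ncp k n) x y :
  ncmul f g [:: x; y] = f [::] * g [:: x; y] + f [:: x] * g [:: y] + f [:: x; y] * g [::].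
Proof. by rewrite /ncmul !big_ord_recl big_ord0 addr0 addrA. Qed.

Lemma ncpoly_mul (k : fieldType) (n : nat) (f g : ncp k n) :
  ncpoly f -> ncpoly g -> ncpoly (ncmul f g).
Proof.
move=> [N1 h1] [N2 h2]; exists (N1 + N2)%N => w hw.
rewrite /ncmul big1 // => i _.
have hi : (i <= size w)%N by rewrite -ltnS ltn_ord.
case: (leqP N1 i) => hN.
  by rewrite h1 ?mul0r // size_takel.
by rewrite h2 ?mulr0 // size_drop; lia.
Qed.
Lemma var0 (k : fieldType) (n : nat) (i : 'I_n) : ncvar k i [::] = 0.
Proof. by []. Qed.
Lemma var1 (k : fieldType) (n : nat) (i z : 'I_n) : ncvar k i [:: z] = (z == i)%:R.
Proof. by rewrite /ncvar eqseq_cons andbT. Qed.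
Lemma var2 (k : fieldType) (n : nat) (i x y : 'I_n) : ncvar k i [:: x; y] = 0.
Proof. by rewrite /ncvar eqseq_cons andbF. Qed.

Lemma qrel0 (k : fieldType) (n : nat) (q : 'M[k]_n) i j : qrel q i j [::] = 0.
Proof. by rewrite /qrel /ncsub /ncscale !ncmul0 !var0 !mul0r mulr0 subr0. Qed.
Lemma qrel1 (k : fieldType) (n : nat) (q : 'M[k]_n) i j z : qrel q i j [:: z] = 0.
Proof. by rewrite /qrel /ncsub /ncscale !ncmul1 !var0 !mul0r !mulr0 !addr0 mulr0 subr0. Qed.
Lemma qrel2 (k : fieldType) (n : nat) (q : 'M[k]_n) i j x y :
  qrel q i j [:: x; y] = (x == j)%:R * (y == i)%:R - q i j * ((x == i)%:R * (y == j)%:R).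
Proof. by rewrite /qrel /ncsub /ncscale !ncmul2 !var0 !var2 !var1 !mul0r !add0r !addr0. Qed.

Lemma qideal_inv (k : fieldType) (n : nat) (q : 'M[k]_n)
  (hq : forall i j, q i j * q j i = 1) (hqd : forall i, q i i = 1) h :
  qideal q h -> [/\ h [::] = 0, (forall z, h [:: z] = 0),
    (forall x, h [:: x; x] = 0) & (forall x y, h [:: x; y] + q x y * h [:: y; x] = 0)].
Proof.
elim=> [|f g _ [a1 b1 c1 d1] _ [a2 b2 c2 d2]|a b i j _ _].
- by split=> *; rewrite /nc0 ?mulr0 ?addr0.
- split.
  + by rewrite /ncadd a1 a2 addr0.
  + by move=> z; rewrite /ncadd b1 b2 addr0.
  + by move=> x; rewrite /ncadd c1 c2 addr0.
  + by move=> x y; rewrite /ncadd mulrDr addrACA d1 d2 addr0.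
have E : forall x y, ncmul (ncmul a (qrel q i j)) b [:: x; y] =
    a [::] * qrel q i j [:: x; y] * b [::].
  by move=> x y; rewrite !ncmul2 !ncmul1 (ncmul0 a) !qrel0 !qrel1 !mulr0 !mul0r !addr0 !add0r ?mul0r ?add0r.
split.
- by rewrite (ncmul0 (ncmul a _)) (ncmul0 a) qrel0 mulr0 !mul0r.
- by move=> z; rewrite (ncmul1 (ncmul a _)) (ncmul1 a) (ncmul0 a) qrel0 qrel1 !mulr0 !mul0r !addr0 ?mul0r ?addr0.
- move=> x; rewrite E qrel2; case: (eqVneq i j) => [<-|nij].
    by rewrite hqd mul1r subrr mulr0 mul0r.
  case: (eqVneq x j) => hxj; case: (eqVneq x i) => hxi;
    rewrite /= ?mulr0n ?mulr1n ?mul0r ?mulr0 ?mul1r ?mulr1 ?subr0 ?sub0r ?addr0 ?add0r ?subrr ?mulr0 ?mul0r //.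
  by move: nij; rewrite -hxi -hxj eqxx.
- move=> x y; rewrite !E.
  have -> : a [::] * qrel q i j [:: x; y] * b [::] + q x y * (a [::] * qrel q i j [:: y; x] * b [::])
     = a [::] * (qrel q i j [:: x; y] + q x y * qrel q i j [:: y; x]) * b [::] by ring.
  rewrite !qrel2; case: (eqVneq i j) => [<-|nij].
    by rewrite hqd !mul1r !subrr mulr0 addr0 mulr0 mul0r.
  apply/eqP; rewrite !mulf_eq0; apply/orP; left; apply/orP; right.
  case: (eqVneq x j) => hxj; case: (eqVneq y i) => hyi;
  case: (eqVneq x i) => hxi; case: (eqVneq y j) => hyj;
  rewrite /= ?mulr0n ?mulr1n ?mul0r ?mulr0 ?mul1r ?mulr1 ?subr0 ?sub0r ?addr0 ?add0r ?subrr ?mulr0 ?mul0r ?mulrN ?addNr //.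
  all: rewrite ?mulr1; try subst x; try subst y.
  all: try (by rewrite mulrC hq subrr); try (by rewrite addNr).
  all: by move: nij; rewrite ?hyj ?hxi ?hyi ?hxj eqxx.
Qed.

Definition goodF (k : fieldType) (n : nat) (q : 'M[k]_n) (F : ncp k n -> k) :=
  [/\ (forall f g, F (ncadd f g) = F f + F g), (forall c f, F (ncscale c f) = c * F f)
   & (forall h, qideal q h -> F h = 0)].

Lemma good_qeq (k : fieldType) (n : nat) (q : 'M[k]_n) F f g :
  goodF q F -> qeq q f g -> F f = F g.
Proof.
case=> hD hZ hI hfg; have := hI _ hfg.
have -> : ncsub f g = ncadd f (ncscale (-1) g).
  by apply: functional_extensionality => w; rewrite /ncsub /ncadd /ncscale mulN1r.
by rewrite hD hZ mulN1r => /eqP; rewrite subr_eq0 => /eqP.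
Qed.

Lemma ncpoly_var (k : fieldType) (n : nat) (i : 'I_n) : ncpoly (ncvar k i).
Proof.
exists 2%N => w hw; rewrite /ncvar; case: eqP => // hw'; move: hw; rewrite hw' //.
Qed.

Lemma ncpoly_scale (k : fieldType) (n : nat) c (f : ncp k n) : ncpoly f -> ncpoly (ncscale c f).
Proof. by case=> N h; exists N => w hw; rewrite /ncscale h // mulr0. Qed.

Lemma ncpoly_nc1 (k : fieldType) (n : nat) : ncpoly ((@nc1 k n)).
Proof. by exists 1%N => -[|x w] //. Qed.

Lemma ncpoly_nc0 (k : fieldType) (n : nat) : ncpoly ((@nc0 k n)).
Proof. by exists 0%N. Qed.

Lemma ncmul1f (k : fieldType) (n : nat) (f : ncp k n) : ncmul ((@nc1 k n)) f = f.
Proof.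
apply: functional_extensionality => w; rewrite /ncmul big_ord_recl /nc1 take0 drop0 eqxx mul1r big1 ?addr0 //.
move=> i _; suff -> : (take (bump 0 i) w == [::]) = false by rewrite mul0r.
by apply/negbTE; rewrite -size_eq0 size_takel // /bump /= add1n ltn_ord.
Qed.

Lemma ncmulf1 (k : fieldType) (n : nat) (f : ncp k n) : ncmul f ((@nc1 k n)) = f.
Proof.
apply: functional_extensionality => w; rewrite /ncmul big_ord_recr /= /nc1 drop_size take_size eqxx mulr1 big1 ?add0r //.
move=> i _; suff -> : (drop i w == [::]) = false by rewrite mulr0.
by apply/negbTE; rewrite -size_eq0 size_drop subn_eq0 -ltnNge ltn_ord.
Qed.

Lemma qrel_qeq (k : fieldType) (n : nat) (q : 'M[k]_n) i j : qeq q (qrel q i j) ((@nc0 k n)).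
Proof.
rewrite /qeq.
have -> : ncsub (qrel q i j) ((@nc0 k n)) = ncmul (ncmul ((@nc1 k n)) (qrel q i j)) ((@nc1 k n)).
  rewrite ncmulf1 ncmul1f; apply: functional_extensionality => w.
  by rewrite /ncsub /nc0 subr0.
by apply: qidealG; apply: ncpoly_nc1.
Qed.

Lemma ncpoly_qrel (k : fieldType) (n : nat) (q : 'M[k]_n) i j : ncpoly (qrel q i j).
Proof.
have [N1 h1] := ncpoly_mul (ncpoly_var k j) (ncpoly_var k i).
have [N2 h2] := ncpoly_mul (ncpoly_var k i) (ncpoly_var k j).
exists (N1 + N2)%N => w hw; rewrite /qrel /ncsub /ncscale h1 ?h2 ?mulr0 ?subr0 //.
  by apply: leq_trans hw; apply: leq_addl.
by apply: leq_trans hw; apply: leq_addr.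
Qed.

Definition Lv (k : fieldType) (n : nat) (m : 'M[k]_n) (i : 'I_n) : ncp k n :=
  fun w => \sum_(j < n) m j i * ncvar k j w.

Section Part2.
End Part2.

Lemma key_eq (k : fieldType) (n : nat) (q m : 'M[k]_n) psi F i j :
  qgraded_aut q m psi -> goodF q F ->
  F (ncmul (psi (ncvar k j)) (psi (ncvar k i))) - q i j * F (ncmul (psi (ncvar k i)) (psi (ncvar k j))) = 0.
Proof.
case=> hpoly hwd hadd hsc hmul _ _ _ _ _ hF.
have hF' := hF; case: hF' => hD hZ hI.
have psi0 : F (psi ((@nc0 k n))) = 0.
  have -> : (@nc0 k n) = ncscale 0 ((@nc0 k n)).
    by apply: functional_extensionality => w; rewrite /ncscale /nc0 mul0r.
  by rewrite (good_qeq hF (hsc 0 _ (ncpoly_nc0 k n))) hZ mul0r.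
have pv := @ncpoly_var k n.
have hr := good_qeq hF (hwd _ _ (ncpoly_qrel q i j) (ncpoly_nc0 k n) (qrel_qeq q i j)).
rewrite psi0 in hr.
have pX : forall a b : 'I_n, ncpoly (ncmul (ncvar k a) (ncvar k b)).
  by move=> a b; exact: ncpoly_mul (pv a) (pv b).
have eR : qrel q i j = ncadd (ncmul (ncvar k j) (ncvar k i))
   (ncscale (-1) (ncscale (q i j) (ncmul (ncvar k i) (ncvar k j)))).
  by apply: functional_extensionality => w; rewrite /qrel /ncsub /ncadd /ncscale mulN1r.
rewrite eR in hr.
rewrite (good_qeq hF (hadd _ _ (pX _ _) (ncpoly_scale _ (ncpoly_scale _ (pX _ _))))) hD in hr.
rewrite (good_qeq hF (hsc _ _ (ncpoly_scale _ (pX _ _)))) hZ in hr.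
rewrite (good_qeq hF (hsc _ _ (pX _ _))) hZ in hr.
rewrite !(good_qeq hF (hmul _ _ (pv _) (pv _))) in hr.
by rewrite -hr mulN1r.
Qed.

Lemma sum_delta (k : fieldType) (n : nat) (F : 'I_n -> k) z :
  \sum_(j < n) F j * (z == j)%:R = F z.
Proof.
rewrite (bigD1 z) //= eqxx mulr1 big1 ?addr0 // => j hj.
by rewrite eq_sym (negbTE hj) mulr0.
Qed.

Lemma good0 (k : fieldType) (n : nat) (q : 'M[k]_n) (hq : forall i j, q i j * q j i = 1) (hqd : forall i, q i i = 1) : goodF q (fun f : ncp k n => f [::]).
Proof. by split => // h /(qideal_inv hq hqd) []. Qed.
Lemma good1 (k : fieldType) (n : nat) (q : 'M[k]_n) (hq : forall i j, q i j * q j i = 1) (hqd : forall i, q i i = 1) z : goodF q (fun f : ncp k n => f [:: z]).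
Proof. by split => // h /(qideal_inv hq hqd) []. Qed.
Lemma goodd (k : fieldType) (n : nat) (q : 'M[k]_n) (hq : forall i j, q i j * q j i = 1) (hqd : forall i, q i i = 1) x : goodF q (fun f : ncp k n => f [:: x; x]).
Proof. by split => // h /(qideal_inv hq hqd) []. Qed.
Lemma goodq (k : fieldType) (n : nat) (q : 'M[k]_n) (hq : forall i j, q i j * q j i = 1) (hqd : forall i, q i i = 1) a b :
  goodF q (fun f : ncp k n => f [:: a; b] + q a b * f [:: b; a]).
Proof.
split.
- by move=> f g; rewrite /ncadd; ring.
- by move=> c f; rewrite /ncscale; ring.
- by move=> h /(qideal_inv hq hqd) [].
Qed.

Lemma Pvals (k : fieldType) (n : nat) (q m : 'M[k]_n) (hq : forall i j, q i j * q j i = 1) (hqd : forall i, q i i = 1) psi i :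
  qgraded_aut q m psi -> psi (ncvar k i) [::] = 0 /\ forall z, psi (ncvar k i) [:: z] = m z i.
Proof.
move=> ha; have hg := qa_gen ha i; split.
  rewrite (good_qeq (good0 hq hqd) hg) big1 // => j _; by rewrite var0 mulr0.
by move=> z; rewrite (good_qeq (good1 hq hqd z) hg); under eq_bigr do rewrite var1; rewrite sum_delta.
Qed.

Lemma part2_eqs (k : fieldType) (n : nat) (q m : 'M[k]_n) (hq : forall i j, q i j * q j i = 1) (hqd : forall i, q i i = 1) psi :
  qgraded_aut q m psi ->
  (forall i j a b, (m a j * m b i + q a b * (m b j * m a i))
                   - q i j * (m a i * m b j + q a b * (m b i * m a j)) = 0) /\
  (forall i j a, m a j * m a i - q i j * (m a i * m a j) = 0).
Proof.
move=> ha; split.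
  move=> i j a b; have := key_eq i j ha (goodq hq hqd a b).
  rewrite /= !ncmul2.
  have [pi0 pi1] := Pvals hq hqd i ha; have [pj0 pj1] := Pvals hq hqd j ha.
  by rewrite pi0 pj0 !pi1 !pj1 !mulr0 !mul0r !addr0 !add0r.
move=> i j a; have := key_eq i j ha (goodd hq hqd a).
rewrite /= !ncmul2.
have [pi0 pi1] := Pvals hq hqd i ha; have [pj0 pj1] := Pvals hq hqd j ha.
by rewrite pi0 pj0 !pi1 !pj1 !mulr0 !mul0r !addr0 !add0r.
Qed.

Lemma skel_compat (k : fieldType) (n : nat) (q m : 'M[k]_n)
  (hqd : forall i, q i i = 1) (hm : m \in unitmx)
  (E2 : forall i j a b, (m a j * m b i + q a b * (m b j * m a i))
                   - q i j * (m a i * m b j + q a b * (m b i * m a j)) = 0)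
  (E1 : forall i j a, m a j * m a i - q i j * (m a i * m a j) = 0)
  (p : 'S_n) : p \in Skel m -> p \in Pq q.
Proof.
rewrite !inE => /forallP hs; apply/forallP => i; apply/forallP => j; apply/eqP.
case: (eqVneq i j) => [<-|nij]; first by rewrite !hqd.
have nab : p i != p j by rewrite (inj_eq perm_inj).
move: (hs i) (hs j) (E2 i j (p i) (p j)) (E1 i j (p i)) (E1 i j (p j)).
set a := p i; set b := p j; set u := q a b; set v := q i j => hai hbj e2 e1a e1b.
apply/eqP; apply: contraT => huv.
have huv' : u - v != 0 by rewrite subr_eq0.
have haj : m a j != 0.
  apply/eqP => h0; move: e2; rewrite h0 => e2.
  have : (u - v) * (m a i * m b j) = 0 by rewrite -[RHS]e2; ring.
  by move/eqP; rewrite !mulf_eq0 (negbTE huv') (negbTE hai) (negbTE hbj).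
have hv1 : v = 1.
  have : (1 - v) * (m a i * m a j) = 0 by rewrite -[RHS]e1a; ring.
  move/eqP; rewrite !mulf_eq0 (negbTE hai) (negbTE haj) !orbF subr_eq0 => /eqP.
  by move=> ->.
have hbi : m b i != 0.
  apply/eqP => h0; move: e2; rewrite h0 => e2.
  have : (u - v) * (m a i * m b j) = 0 by rewrite -[RHS]e2; ring.
  by move/eqP; rewrite !mulf_eq0 (negbTE huv') (negbTE hai) (negbTE hbj).
have hu1 : 1 - u != 0 by rewrite subr_eq0 eq_sym -hv1.
have h5 : forall c, m a c * m b i = m a i * m b c.
  move=> c.
  have hc1 : m a c != 0 \/ m b c != 0 -> q i c = 1.
    case=> hc.
      have : (1 - q i c) * (m a i * m a c) = 0 by rewrite -[RHS](E1 i c a); ring.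
      by move/eqP; rewrite !mulf_eq0 (negbTE hai) (negbTE hc) !orbF subr_eq0 => /eqP <-.
    have : (1 - q i c) * (m b i * m b c) = 0 by rewrite -[RHS](E1 i c b); ring.
    by move/eqP; rewrite !mulf_eq0 (negbTE hbi) (negbTE hc) !orbF subr_eq0 => /eqP <-.
  case: (eqVneq (m a c) 0) => hac; case: (eqVneq (m b c) 0) => hbc.
  - by rewrite hac hbc !mul0r mulr0.
  1-3: have hqc : q i c = 1 by apply: hc1; first [by left | by right].
  1-3: have := E2 i c a b; rewrite -/u hqc => e.
  1-3: have : (1 - u) * (m a c * m b i - m a i * m b c) = 0 by rewrite -[RHS]e; ring.
  1-3: by move/eqP; rewrite mulf_eq0 (negbTE hu1) /= subr_eq0 => /eqP.
pose r : 'rV[k]_n := m a i *: 'e_b - m b i *: 'e_a.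
have hr : r *m m = 0.
  rewrite mulmxBl -!scalemxAl -!rowE; apply/rowP => c; by rewrite !mxE -h5 mulrC subrr.
have r0 : r = 0 by rewrite -(mulmxK hm r) hr mul0mx.
have := congr1 (fun M : 'rV[k]_n => M 0 b) r0.
rewrite !mxE !eqxx /= eq_sym (negbTE nab) mulr1 mulr0 subr0 => /eqP.
by rewrite (negbTE hai).
Qed.

Definition psiP (k : fieldType) (n : nat) (p : 'S_n) (f : ncp k n) : ncp k n :=
  fun w => f (map (p^-1)%g w).

Lemma psiP_mul (k : fieldType) (n : nat) (p : 'S_n) (f g : ncp k n) :
  psiP p (ncmul f g) = ncmul (psiP p f) (psiP p g).
Proof.
apply: functional_extensionality => w; rewrite /psiP /ncmul size_map.
by apply: eq_bigr => i _; rewrite map_take map_drop.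
Qed.

Lemma psiP_var (k : fieldType) (n : nat) (p : 'S_n) (i : 'I_n) :
  psiP p (ncvar k i) = ncvar k (p i).
Proof.
apply: functional_extensionality => w; rewrite /psiP /ncvar; congr (_ %:R).
case: w => [|x w] //=; rewrite !eqseq_cons; congr (_ && _); last by case: w.
apply/eqP/eqP => [<-|->]; by rewrite ?permKV ?permK.
Qed.

Lemma psiP_qrel (k : fieldType) (n : nat) (q : 'M[k]_n) (p : 'S_n) i j :
  p \in Pq q -> psiP p (qrel q i j) = qrel q (p i) (p j).
Proof.
rewrite inE => /forallP /(_ i) /forallP /(_ j) /eqP hp.
rewrite /qrel hp -!psiP_var -!psiP_mul.
by apply: functional_extensionality => w.
Qed.

Lemma ncpoly_psiP (k : fieldType) (n : nat) (p : 'S_n) (f : ncp k n) :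
  ncpoly f -> ncpoly (psiP p f).
Proof. by case=> N h; exists N => w hw; rewrite /psiP h // size_map. Qed.

Lemma psiP_ideal (k : fieldType) (n : nat) (q : 'M[k]_n) (p : 'S_n) h :
  p \in Pq q -> qideal q h -> qideal q (psiP p h).
Proof.
move=> hp; elim=> [|f g _ hf _ hg|a b i j ha hb].
- exact: qideal0.
- exact: qidealD hf hg.
- rewrite !psiP_mul psiP_qrel //.
  by apply: qidealG; apply: ncpoly_psiP.
Qed.

Lemma psiP_inv (k : fieldType) (n : nat) (p : 'S_n) (f : ncp k n) :
  psiP (p^-1)%g (psiP p f) = f.
Proof.
apply: functional_extensionality => w; rewrite /psiP -map_comp invgK.
congr f; rewrite -[RHS]map_id; apply: eq_map => x /=; exact: permK.
Qed.

Lemma Pq_inv (k : fieldType) (n : nat) (q : 'M[k]_n) (p : 'S_n) :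
  p \in Pq q -> (p^-1)%g \in Pq q.
Proof.
rewrite !inE => /forallP hp; apply/forallP => i; apply/forallP => j.
have := hp (p^-1 i)%g => /forallP /(_ (p^-1 j)%g) /eqP.
by rewrite !permKV => ->.
Qed.

Lemma qeq_refl (k : fieldType) (n : nat) (q : 'M[k]_n) (f : ncp k n) : qeq q f f.
Proof.
rewrite /qeq; have -> : ncsub f f = @nc0 k n.
  by apply: functional_extensionality => w; rewrite /ncsub subrr.
exact: qideal0.
Qed.

Lemma part1 (k : fieldType) (n : nat) (q : 'M[k]_n) (p : 'S_n) :
  p \in Pq q -> MO q (rperm k p).
Proof.
move=> hp; split.
  have -> : rperm k p = (perm_mx p)^T.
    by apply/matrixP => i j; rewrite !mxE eq_sym.
  by rewrite unitmx_tr unitmx_perm.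
have hpi := Pq_inv hp.
exists (psiP p); split.
- by move=> f; apply: ncpoly_psiP.
- by move=> f g _ _; apply: psiP_ideal.
- by move=> *; apply: qeq_refl.
- by move=> *; apply: qeq_refl.
- by move=> *; rewrite psiP_mul; apply: qeq_refl.
- have -> : psiP p (@nc1 k n) = @nc1 k n.
    by apply: functional_extensionality => -[|x w].
  exact: qeq_refl.
- move=> i; rewrite psiP_var.
  have -> : (fun w => \sum_(j < n) rperm k p j i * ncvar k j w) = ncvar k (p i).
    apply: functional_extensionality => w.
    rewrite (bigD1 (p i)) //= !mxE eqxx mul1r big1 ?addr0 // => j hj.
    by rewrite !mxE (negbTE hj) mul0r.
  exact: qeq_refl.
- move=> f g _ _ h; have := psiP_ideal hpi h.
  rewrite /qeq.
  change (qideal q (ncsub (psiP (p^-1)%g (psiP p f)) (psiP (p^-1)%g (psiP p g))) -> qideal q (ncsub f g)).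
  by rewrite !psiP_inv.
- move=> g pg; exists (psiP (p^-1)%g g); first exact: ncpoly_psiP.
  have -> : psiP p (psiP (p^-1)%g g) = g by rewrite -{2}(psiP_inv (p^-1)%g g) invgK.
  exact: qeq_refl.
- move=> d f _ hf; exists (psiP p f); last exact: qeq_refl.
  by move=> w hw; rewrite /psiP hf // size_map.
Qed.

Unset Implicit Arguments.

Theorem lemma3p4 (k : fieldType) (n : nat) (q : 'M[k]_n)
  (hn : (1 <= n)%N)
  (hq : forall i j, q i j * q j i = 1) (hqd : forall i, q i i = 1)
  (p : 'S_n) (m : 'M[k]_n) (hm : m \in unitmx) :
  (p \in Pq q -> MO q (rperm k p)) /\
  (MO q m -> Skel m \subset Pq q).
Proof.
split; first exact: part1.
case=> _ [psi ha]; have [E2 E1] := part2_eqs hq hqd ha.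
apply/subsetP => s; exact: skel_compat hqd hm E2 E1 s.
Qed.
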